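(* Let $n\ge0$, and let $e=(x,y)$ be an arc of $A(n)$. For each arc $(x,x')$ of $A(n)$ different from $e$, there exists exactly one arc $(y,y')$ of $A(n)$ such that $(x',y')$ is an arc of $A(n)$.
   Context: A hyperbinary expansion of a nonnegative integer $n$ is a word $x_0\cdots x_k$ over $\{0,1,2\}$ with $x_0\ne0$ and $\sum_i x_i2^{k-i}=n$; the empty word is the unique expansion of $0$. $\mathcal H(n)$ is the set of such expansions. $A(n)$ is the directed graph on $\mathcal H(n)$ with the following labeled arcs, for arbitrary words $\mathbf x,\mathbf y$ whenever both endpoints lie in $\mathcal H(n)$: \begin{itemize} \item an arc labeled $\to$ from $\mathbf x02\mathbf y$ to $\mathbf x10\mathbf y$ and from $2\mathbf y$ to $10\mathbf y$; \item an arc labeled $\twoheadrightarrow$ from $\mathbf x12\mathbf y$ to $\mathbf x20\mathbf y$. \end{itemize} *)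

(* Defs.v *)
From Stdlib Require Import List Arith.
Import ListNotations.

Definition word := list nat.

(* Value sum_i x_i 2^(k-i) (most significant digit first). *)
Definition word_value (w : word) : nat :=
  fold_left (fun acc d => 2 * acc + d) w 0.

Definition hyperbinary (n : nat) (w : word) : Prop :=
  Forall (fun d => d <= 2) w /\
  (match w with [] => True | d :: _ => d <> 0 end) /\
  word_value w = n.

Definition arc_to (u v : word) : Prop :=
  (exists x y, u = x ++ [0; 2] ++ y /\ v = x ++ [1; 0] ++ y) \/
  (exists y, u = 2 :: y /\ v = [1; 0] ++ y).

Definition arc_tt (u v : word) : Prop :=
  exists x y, u = x ++ [1; 2] ++ y /\ v = x ++ [2; 0] ++ y.

Definition arcA (n : nat) (u v : word) : Prop :=
  hyperbinary n u /\ hyperbinary n v /\ (arc_to u v \/ arc_tt u v).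

(* Main.v *)
Require Import Defs.
From Stdlib Require Import List Arith Lia.
Import ListNotations.

Definition inc (L : list nat) : list nat :=
  match L with [] => [1] | c :: B => S c :: B end.

Fixpoint fire (p : nat) (L : list nat) : list nat :=
  match p, L with
  | _, [] => []
  | 0, _ :: B => 0 :: inc B
  | S p', d :: B => d :: fire p' B
  end.

Definition canfire (p : nat) (L : list nat) : Prop :=
  nth p L 0 = 2 /\ nth (S p) L 0 < 2.

Lemma fire_app A d B : fire (length A) (A ++ d :: B) = A ++ 0 :: inc B.
Proof. induction A; simpl; [reflexivity| now rewrite IHA]. Qed.

Lemma nth_app_len A d B : nth (length A) (A ++ d :: B) 0 = d.
Proof. induction A; simpl; auto. Qed.

Lemma nth_app_lenS A d B : nth (S (length A)) (A ++ d :: B) 0 = nth 0 B 0.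
Proof. induction A; simpl; auto. Qed.

Lemma nth_fire L : forall p i, p < length L ->
  nth i (fire p L) 0 = if i =? p then 0 else if i =? S p then S (nth i L 0) else nth i L 0.
Proof.
  induction L as [|d B IH]; intros p i Hp; simpl in Hp; [lia|].
  destruct p as [|p].
  - destruct i as [|[|i]]; simpl; auto.
    + destruct B; reflexivity.
    + destruct B; simpl; auto. destruct i; reflexivity.
  - destruct i as [|i]; simpl; auto. apply IH. lia.
Qed.

Lemma nth_nz_lt L i : nth i L 0 <> 0 -> i < length L.
Proof.
  intros H. destruct (Nat.lt_ge_cases i (length L)); auto.
  rewrite nth_overflow in H by auto. lia.
Qed.

Lemma fire_comm L : forall p q, S p < q -> q < length L ->
  fire p (fire q L) = fire q (fire p L).
Proof.
  induction L as [|d B IH]; intros p q Hpq Hq; simpl in Hq; [lia|].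
  destruct p as [|p].
  - destruct q as [|[|q]]; try lia.
    destruct B as [|c B']; simpl in Hq; [lia|]. reflexivity.
  - destruct q as [|q]; [lia|]. simpl. f_equal. apply IH; lia.
Qed.

Lemma rev4 (a b : list nat) c d : rev (a ++ c :: d :: b) = rev b ++ d :: c :: rev a.
Proof. rewrite rev_app_distr. simpl. rewrite <- !app_assoc. reflexivity. Qed.

Lemma arc_fire n u v : arcA n u v -> exists p, canfire p (rev u) /\ rev v = fire p (rev u).
Proof.
  intros [_ [_ [[[a [b [-> ->]]]|[b [-> ->]]]|[a [b [-> ->]]]]]].
  - simpl. rewrite !rev4. exists (length (rev b)). split.
    + split; [apply nth_app_len| rewrite nth_app_lenS; simpl; lia].
    + rewrite fire_app. reflexivity.
  - simpl. rewrite <- app_assoc. simpl. exists (length (rev b)). split.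
    + split; [apply nth_app_len| rewrite nth_app_lenS; simpl; lia].
    + rewrite fire_app. reflexivity.
  - simpl. rewrite !rev4. exists (length (rev b)). split.
    + split; [apply nth_app_len| rewrite nth_app_lenS; simpl; lia].
    + rewrite fire_app. reflexivity.
Qed.

Lemma wv_app X Y : word_value (X ++ Y) = fold_left (fun acc d => 2 * acc + d) Y (word_value X).
Proof. unfold word_value. apply fold_left_app. Qed.

Lemma hyp_step n X Y c : c < 2 -> hyperbinary n (X ++ [c;2] ++ Y) -> hyperbinary n (X ++ [S c;0] ++ Y).
Proof.
  intros Hc [HF [Hh Hv]]. split; [|split].
  - apply Forall_app in HF as [H1 H2]. apply Forall_app. split; auto.
    inversion H2; subst. inversion H4; subst. simpl. constructor; [lia|constructor; [lia|auto]].
  - destruct X; simpl in *; auto.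
  - rewrite wv_app in *. simpl in *. rewrite <- Hv. f_equal. lia.
Qed.

Lemma hyp_start n Y : hyperbinary n (2 :: Y) -> hyperbinary n (1 :: 0 :: Y).
Proof.
  intros [HF [Hh Hv]]. split; [|split].
  - inversion HF; subst. repeat constructor; auto.
  - simpl. lia.
  - unfold word_value in *. simpl in *. exact Hv.
Qed.

Lemma fire_arc n u p : hyperbinary n u -> canfire p (rev u) -> arcA n u (rev (fire p (rev u))).
Proof.
  intros Hu [H2 H3].
  destruct (nth_split (rev u) 0 (nth_nz_lt (rev u) p ltac:(lia))) as [A [B [HL HA]]].
  rewrite H2 in HL. subst p.
  rewrite HL in H3. rewrite nth_app_lenS in H3.
  rewrite HL. rewrite fire_app.
  assert (Hu' : u = rev (A ++ 2 :: B)) by (rewrite <- HL; symmetry; apply rev_involutive).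
  clear HL H2. subst u.
  destruct B as [|c B'].
  - simpl in *. rewrite !rev_app_distr in *. simpl in *.
    split; [exact Hu|split; [apply hyp_start; exact Hu|]].
    left. right. exists (rev A). split; reflexivity.
  - simpl in H3. rewrite !rev4 in *.
    assert (E1 : rev B' ++ c :: 2 :: rev A = rev B' ++ [c;2] ++ rev A) by reflexivity.
    assert (E2 : rev B' ++ S c :: 0 :: rev A = rev B' ++ [S c;0] ++ rev A) by reflexivity.
    simpl inc. rewrite rev4. rewrite E1 in *. rewrite E2.
    split; [exact Hu|split; [apply hyp_step; [lia|exact Hu]|]].
    destruct c as [|[|c]]; try lia.
    + left. left. exists (rev B'), (rev A). split; reflexivity.
    + right. exists (rev B'), (rev A). split; reflexivity.
Qed.

Lemma rev_inj (a b : list nat) : rev a = rev b -> a = b.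
Proof. intros H. rewrite <- (rev_involutive a), <- (rev_involutive b), H. reflexivity. Qed.

Lemma canfire_after X p q : canfire p X -> canfire q X -> (S p < q \/ S q < p) ->
  canfire q (fire p X).
Proof.
  intros [Hp1 Hp2] [Hq1 Hq2] H.
  assert (Hl : p < length X) by (apply nth_nz_lt; lia).
  unfold canfire. rewrite !nth_fire by auto.
  destruct (Nat.eqb_spec q p); [lia|]. destruct (Nat.eqb_spec q (S p)); [lia|].
  split; auto.
  destruct (Nat.eqb_spec (S q) p); [lia|]. destruct (Nat.eqb_spec (S q) (S p)); [lia|]. auto.
Qed.

Theorem mainTheorem9 (n : nat) (x y x' : word) :
  arcA n x y -> arcA n x x' -> x' <> y ->
  exists! y', arcA n y y' /\ arcA n x' y'.
Proof.
  intros Hy Hx Hne.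
  destruct (arc_fire _ _ _ Hy) as [p [Cp Ey]].
  destruct (arc_fire _ _ _ Hx) as [q [Cq Ex]].
  set (X := rev x) in *.
  assert (Hpq : p <> q).
  { intros ->. apply Hne, rev_inj. congruence. }
  assert (Hadj : S p < q \/ S q < p).
  { destruct Cp, Cq. destruct (Nat.lt_total p q) as [Hl|[Hl|Hl]]; try lia.
    - destruct (Nat.eq_dec q (S p)); [subst; lia|lia].
    - destruct (Nat.eq_dec p (S q)); [subst; lia|lia]. }
  assert (Lp : p < length X) by (apply nth_nz_lt; destruct Cp; lia).
  assert (Lq : q < length X) by (apply nth_nz_lt; destruct Cq; lia).
  assert (Cqp : canfire q (fire p X)) by (apply canfire_after; auto).
  assert (Cpq : canfire p (fire q X)) by (apply canfire_after; auto; lia).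
  assert (Comm : fire p (fire q X) = fire q (fire p X)).
  { destruct Hadj; [apply fire_comm; auto|symmetry; apply fire_comm; auto]. }
  destruct Hy as [_ [Hyh _]]. destruct Hx as [_ [Hxh _]].
  exists (rev (fire q (fire p X))). split; [split|].
  - pose proof (fire_arc n y q Hyh) as H. rewrite Ey in H. apply H. auto.
  - pose proof (fire_arc n x' p Hxh) as H. rewrite Ex in H. rewrite <- Comm. apply H. auto.
  - intros y'' [H1 H2].
    destruct (arc_fire _ _ _ H1) as [s [Cs Es]].
    destruct (arc_fire _ _ _ H2) as [t [Ct Et]].
    rewrite Ey in Cs, Es. rewrite Ex in Ct, Et.
    assert (Hsq : s = q).
    { destruct (Nat.eq_dec s q); auto. exfalso.
      destruct Cs as [Cs1 _]. destruct Ct as [Ct1 _].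
      assert (Ls : s < length (fire p X)) by (apply nth_nz_lt; lia).
      assert (Lt : t < length (fire q X)) by (apply nth_nz_lt; lia).
      assert (E : nth q (fire s (fire p X)) 0 = nth q (fire t (fire q X)) 0) by congruence.
      rewrite (nth_fire (fire p X)) in E by auto.
      rewrite (nth_fire (fire q X)) in E by auto.
      rewrite (nth_fire X p q) in E by auto.
      rewrite (nth_fire X q q) in E by auto.
      rewrite (nth_fire X q t) in Ct1 by auto.
      rewrite Nat.eqb_refl in E.
      destruct Cq as [Cq1 _].
      repeat match goal with
      | H : context [?a =? ?b] |- _ => destruct (Nat.eqb_spec a b)
      end; subst; try lia. }
    subst s. apply rev_inj. rewrite rev_involutive. congruence.
Qed.
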